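(* Let $M_1,M_2$ be connected Bowditch boundaries of relatively hyperbolic pairs $(G_1,\mathbb{P}_1)$ and $(G_2,\mathbb{P}_2)$, and let $T(M_i)$ denote the exact cut pair/cut point tree of $M_i$. Each homeomorphism $f\colon M_1\to M_2$ induces a graph isomorphism $\hat f\colon T(M_1)\to T(M_2)$. Moreover, if $M_3$ is also such a boundary and $f_i\colon M_i\to M_{i+1}$ ($i=1,2$) are homeomorphisms, then $\widehat{f_2f_1}=\hat f_2\hat f_1$, and $\widehat{\mathrm{id}}=\mathrm{id}$.
   Context: Relatively hyperbolic pair $(G,\mathbb{P})$: $G$ finitely generated, $\mathbb{P}$ a finite family of finitely generated subgroups, such that the cusped space (Cayley graph of $G$ with respect to a finite generating set containing generators of each $P$, with a warped-product horoball $\Gamma_{gP}\times_{e^{-t}}[0,\infty)$ attached along each coset subgraph $\Gamma_{gP}$) is Gromov hyperbolic; its Gromov boundary is the Bowditch boundary $\partial(G,\mathbb{P})$. For a compact connected locally connected metrizable space $M$: a cut point is $\eta$ with $M\setminus\{\eta\}$ disconnected. A cut pair is a set of two distinct non-cut points $\{\zeta,\xi\}$ with $M\setminus\{\zeta,\xi\}$ disconnected. For a non-cut point $\zeta$, its valence is the number of ends of $M\setminus\{\zeta\}$. A cut pair $\{\zeta,\xi\}$ is exact if both points have valence equal to the number of components of $M\setminus\{\zeta,\xi\}$; it is inseparable if no other exact cut pair $\{a,b\}$ has $\zeta,\xi$ in distinct components of $M\setminus\{a,b\}$. Let $Z$ be the set of all cut points and inseparable exact cut pairs. Two points of $M\setminus\bigcup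 Z$ are equivalent if no element of $Z$ separates them; a piece is the closure of an equivalence class with at least two points, and $\Pi$ is the set of pieces. $T(M)$ is the bipartite graph with vertex set $Z\sqcup\Pi$, where $z\in Z$ and $\pi\in\Pi$ are adjacent iff $z\subseteq\pi$. *)

(* Defs.v *)
From Stdlib Require Import Reals.
From mathcomp Require Import all_boot all_order all_algebra.
From mathcomp Require Import all_classical all_reals all_analysis.
From mathcomp Require Import Rstruct.
Import Num.Theory.
Set Implicit Arguments. Unset Strict Implicit. Unset Printing Implicit Defensive.
Local Open Scope classical_set_scope.

Definition metrizable (T : topologicalType) : Prop :=
  exists d : T -> T -> R,
    (forall x y, d x y = d y x) /\
    (forall x y, (d x y = 0)%R <-> x = y) /\
    (forall x y z, (d x z <= d x y + d y z)%R) /\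
    (forall (x : T) (A : set T),
        nbhs x A <-> exists e : R, (0 < e)%R /\ [set y | (d x y < e)%R] `<=` A).

Definition locally_connected (T : topologicalType) : Prop :=
  forall (x : T) (U : set T), nbhs x U ->
    exists V : set T, [/\ open V, V x, connected V & V `<=` U].

Definition ccllm_space (T : topologicalType) : Prop :=
  [/\ compact [set: T], connected [set: T], locally_connected T & metrizable T].

Section TreeDefs.
Variable T : topologicalType.

Definition components (A : set T) : set (set T) :=
  [set connected_component A x | x in A].

(* Freudenthal ends of the subspace X: compatible choices, for every compact
   K contained in X, of a component of X \ K whose closure in X is not compact
   (normalized to set0 on all other arguments). *)
Definition ends (X : set T) : set (set T -> set T) :=
  [set e | (forall K, ~ (compact K /\ K `<=` X) -> e K = set0) /\
           (forall K, compact K -> K `<=` X ->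
              components (X `\` K) (e K) /\ ~ compact (closure (e K) `&` X)) /\
           (forall K K', compact K -> compact K' -> K `<=` K' -> K' `<=` X ->
              e K' `<=` e K)].

Definition cut_point (eta : T) : Prop := ~ connected (~` [set eta]).

Definition cut_pair (zeta xi : T) : Prop :=
  [/\ zeta <> xi, ~ cut_point zeta, ~ cut_point xi &
      ~ connected (~` [set zeta; xi])].

(* valence of zeta = number (cardinal) of ends of M \ {zeta};
   exactness compares it with the number of components of M \ {zeta, xi} *)
Definition exact_cut_pair (zeta xi : T) : Prop :=
  [/\ cut_pair zeta xi,
      card_eq (ends (~` [set zeta])) (components (~` [set zeta; xi])) &
      card_eq (ends (~` [set xi])) (components (~` [set zeta; xi]))].

Definition separated_by (S : set T) (x y : T) : Prop :=
  (~` S) x /\ (~` S) y /\ connected_component (~` S) x <> connected_component (~` S) y.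

Definition inseparable_exact_cut_pair (zeta xi : T) : Prop :=
  exact_cut_pair zeta xi /\
  ~ exists a b : T, [/\ exact_cut_pair a b, [set a; b] <> [set zeta; xi] &
                       separated_by [set a; b] zeta xi].

Definition Zset : set (set T) :=
  [set [set eta] | eta in cut_point] `|`
  [set S | exists zeta xi, inseparable_exact_cut_pair zeta xi /\ S = [set zeta; xi]].

Definition unionZ : set T := \bigcup_(z in Zset) z.

Definition equivZ (x y : T) : Prop :=
  (~` unionZ) x /\ (~` unionZ) y /\ forall z, Zset z -> ~ separated_by z x y.

Definition eqclass (x : T) : set T := [set y | equivZ x y].

Definition Piset : set (set T) :=
  [set P | exists x, (~` unionZ) x /\
     (exists y z, eqclass x y /\ eqclass x z /\ y <> z) /\ P = closure (eqclass x)].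

(* the bipartite graph T(M): vertex set Z ⊔ Π *)
Definition tree_vertex (v : set T + set T) : Prop :=
  match v with inl z => Zset z | inr p => Piset p end.

Definition tree_adj (v w : set T + set T) : Prop :=
  match v, w with
  | inl z, inr p => z `<=` p
  | inr p, inl z => z `<=` p
  | _, _ => False
  end.

End TreeDefs.

Definition homeomorphism (T1 T2 : topologicalType) (f : T1 -> T2) : Prop :=
  exists g : T2 -> T1, [/\ cancel f g, cancel g f, continuous f & continuous g].

Definition hat (T1 T2 : topologicalType) (f : T1 -> T2)
    (v : set T1 + set T1) : set T2 + set T2 :=
  match v with inl z => inl (f @` z) | inr p => inr (f @` p) end.

Definition tree_iso (T1 T2 : topologicalType) (F : set T1 + set T1 -> set T2 + set T2)
  : Prop :=
  set_bij (@tree_vertex T1) (@tree_vertex T2) F /\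
  forall v w, tree_vertex v -> tree_vertex w -> (tree_adj v w <-> tree_adj (F v) (F w)).

(* Main.v *)
Require Import Defs.
From mathcomp Require Import all_boot all_classical all_reals all_analysis.
Local Open Scope classical_set_scope.
Set Implicit Arguments.

Definition hp (T1 T2 : topologicalType) (f : T1 -> T2) (g : T2 -> T1) :=
  [/\ cancel f g, cancel g f, continuous f & continuous g].

Arguments hp {T1 T2}.

Lemma hp_sym (T1 T2 : topologicalType) (f : T1 -> T2) g : hp f g -> hp g f.
Proof. by case=> *; split. Qed.

Section L.
Variables (T1 T2 : topologicalType) (f : T1 -> T2) (g : T2 -> T1).
Hypothesis H : hp f g.

Lemma imE (A : set T1) : f @` A = g @^-1` A.
Proof.
case: H => fK gK _ _; apply/seteqP; split => y /=.
  by case=> x Ax <-; rewrite fK.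
by move=> Agy; exists (g y) => //; rewrite gK.
Qed.

Lemma imK (A : set T1) : g @` (f @` A) = A.
Proof.
case: H => fK gK _ _; apply/seteqP; split => y /=.
  by case=> _ [x Ax <-] <-; rewrite fK.
by move=> Ay; exists (f y); [exists y|rewrite fK].
Qed.

Lemma im_inj (A B : set T1) : f @` A = f @` B -> A = B.
Proof. by move=> e; rewrite -(imK A) e imK. Qed.

Lemma imC (A : set T1) : f @` (~` A) = ~` (f @` A).
Proof. by rewrite !imE preimage_setC. Qed.

Lemma imD (A B : set T1) : f @` (A `\` B) = f @` A `\` f @` B.
Proof. by rewrite !imE !setDE preimage_setI preimage_setC. Qed.

Lemma imI (A B : set T1) : f @` (A `&` B) = f @` A `&` f @` B.
Proof. by rewrite !imE preimage_setI. Qed.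

Lemma im2 (a b : T1) : f @` [set a; b] = [set f a; f b].
Proof. by rewrite image_setU !image_set1. Qed.

Lemma finj : injective f.
Proof. by case: H => fK _ _ _; apply: can_inj fK. Qed.

Lemma conn_im (A : set T1) : connected A -> connected (f @` A).
Proof.
case: H => _ _ cf _ cA; apply: connected_continuous_connected => //.
exact: continuous_subspaceT.
Qed.

Lemma comp_im (A : set T1) : compact A -> compact (f @` A).
Proof.
case: H => _ _ cf _ cA; apply: continuous_compact => //.
exact: continuous_subspaceT.
Qed.

Lemma closure_im_sub (A : set T1) : f @` closure A `<=` closure (f @` A).
Proof.
case: H => _ _ cf _ _ [x clx <-] B nB.
have := cf x _ nB => /clx [a [Aa Ba]].
by exists (f a); split => //; exists a.
Qed.

Lemma cc_im_sub (A : set T1) x : f @` connected_component A x `<=`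
   connected_component (f @` A) (f x).
Proof.
move=> _ [y [C [Cx CA cC] Cy] <-].
exists (f @` C); last by exists y.
split; [by exists x| exact: image_subset | exact: conn_im].
Qed.

End L.

Section L2.
Variables (T1 T2 : topologicalType) (f : T1 -> T2) (g : T2 -> T1).
Hypothesis H : hp f g.
Let H' := hp_sym H.

Lemma conn_iff (A : set T1) : connected (f @` A) <-> connected A.
Proof. by split=> [/(conn_im H')|/(conn_im H)//]; rewrite imK. Qed.

Lemma comp_iff (A : set T1) : compact (f @` A) <-> compact A.
Proof. by split=> [/(comp_im H')|/(comp_im H)//]; rewrite imK. Qed.

Lemma closure_im (A : set T1) : f @` closure A = closure (f @` A).
Proof.
apply/seteqP; split; first exact: (closure_im_sub H).
have := closure_im_sub H' (A := f @` A); rewrite (imK H) => /(image_subset f).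
by rewrite (imK H').
Qed.

Lemma cc_im (A : set T1) x : f @` connected_component A x =
   connected_component (f @` A) (f x).
Proof.
apply/seteqP; split; first exact: (cc_im_sub H).
have := cc_im_sub H' (A := f @` A) (x := f x); rewrite (imK H).
case: H => fK _ _ _; rewrite fK => /(image_subset f).
by rewrite (imK H').
Qed.

Lemma components_im (A : set T1) :
  components (f @` A) = (fun C => f @` C) @` components A.
Proof.
apply/seteqP; split.
  move=> _ [_ [x Ax <-] <-]; exists (connected_component A x).
    by exists x.
  by rewrite cc_im.
by move=> _ [_ [x Ax <-] <-]; rewrite cc_im; exists (f x) => //; exists x.
Qed.

End L2.

Definition Phi (T1 T2 : topologicalType) (f : T1 -> T2) (g : T2 -> T1)
  (e : set T1 -> set T1) : set T2 -> set T2 := fun K => f @` e (g @` K).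

Arguments Phi {T1 T2}.

Section L3.
Variables (T1 T2 : topologicalType) (f : T1 -> T2) (g : T2 -> T1).
Hypothesis H : hp f g.
Let H' := hp_sym H.

Lemma ends_mem (X : set T1) e : ends X e -> ends (f @` X) (Phi f g e).
Proof.
case=> [e0 [ec em]]; split; [|split].
- move=> K nK; rewrite /Phi e0 ?image_set0 // => -[cK KX]; apply: nK; split.
    by rewrite -(imK H' K); exact: (comp_im H).
  by rewrite -(imK H' K); exact: image_subset.
- move=> K cK KfX.
  have cgK : compact (g @` K) := comp_im H' cK.
  have gKX : g @` K `<=` X by rewrite -(imK H X); exact: image_subset.
  have [c nc] := ec _ cgK gKX; split.
    have -> : f @` X `\` K = f @` (X `\` g @` K) by rewrite (imD H) (imK H').
    by rewrite /Phi (components_im H); exists (e (g @` K)).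
  by rewrite /Phi -(closure_im H) -(imI H) (comp_iff H).
- move=> K K' cK cK' KK' K'X; rewrite /Phi; apply: image_subset.
  apply: (em _ _ (comp_im H' cK) (comp_im H' cK') (image_subset g KK')).
  by rewrite -(imK H X); exact: image_subset.
Qed.

Lemma Phi_inj : injective (Phi f g).
Proof.
move=> e1 e2 E; apply: funext => K.
have := congr1 (fun F => g @` F (f @` K)) E; rewrite /Phi /=.
by rewrite !(imK H).
Qed.

Lemma setC1_im (e : T1) : ~` [set f e] = f @` (~` [set e]).
Proof. by rewrite (imC H) image_set1. Qed.

Lemma setC2_im (a b : T1) : ~` [set f a; f b] = f @` (~` [set a; b]).
Proof. by rewrite (imC H) im2. Qed.

Lemma cut_iff (e : T1) : cut_point (f e) <-> cut_point e.
Proof. by rewrite /cut_point setC1_im (conn_iff H). Qed.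

Lemma card_comp (A : set T1) : card_eq (components (f @` A)) (components A).
Proof.
rewrite (components_im H); apply: inj_card_eq; apply: in2W.
exact: im_inj H.
Qed.

Lemma sep_im (S : set T1) x y :
  separated_by S x y -> separated_by (f @` S) (f x) (f y).
Proof.
case=> Sx [Sy ne]; rewrite /separated_by -(imC H) -!(cc_im H).
split; [by exists x|split; [by exists y|]].
by move/(im_inj H).
Qed.

End L3.

Section L4.
Variables (T1 T2 : topologicalType) (f : T1 -> T2) (g : T2 -> T1).
Hypothesis H : hp f g.
Let H' := hp_sym H.

Lemma ends_eq (X : set T1) : ends (f @` X) = Phi f g @` ends X.
Proof.
apply/seteqP; split; last by move=> _ [e Xe <-]; exact: ends_mem.
move=> e' /(ends_mem H'); rewrite (imK H) => Xe; exists (Phi g f e') => //.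
by apply: funext => K; rewrite /Phi !(imK H').
Qed.

Lemma card_ends (X : set T1) : card_eq (ends (f @` X)) (ends X).
Proof.
rewrite ends_eq; apply: inj_card_eq; apply: in2W; exact: Phi_inj H.
Qed.

Lemma exact_im (z x : T1) : exact_cut_pair z x -> exact_cut_pair (f z) (f x).
Proof.
case=> [[zx nz nx dc] c1 c2]; split; first split.
- by move/(finj H).
- by rewrite (cut_iff H).
- by rewrite (cut_iff H).
- by rewrite (setC2_im H) (conn_iff H).
- rewrite (setC1_im H) (setC2_im H).
  apply: card_eq_trans (card_ends _) _.
  apply: card_eq_trans c1 _; apply: card_esym; exact: card_comp H _.
- rewrite (setC1_im H) (setC2_im H).
  apply: card_eq_trans (card_ends _) _.
  apply: card_eq_trans c2 _; apply: card_esym; exact: card_comp H _.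
Qed.

End L4.

Section L5.
Variables (T1 T2 : topologicalType) (f : T1 -> T2) (g : T2 -> T1).
Hypothesis H : hp f g.
Let H' := hp_sym H.

Lemma insep_im (z x : T1) :
  inseparable_exact_cut_pair z x -> inseparable_exact_cut_pair (f z) (f x).
Proof.
case: (H) => fK gK _ _.
case=> ex nex; split; first exact: exact_im H _ _ ex.
case=> a [b [eab ne sab]]; apply: nex; exists (g a), (g b); split.
- exact: exact_im H' _ _ eab.
- move=> E; apply: ne; have := congr1 (fun S => f @` S) E.
  by rewrite -im2 (imK H') !im2.
- by have := sep_im H' sab; rewrite !fK im2.
Qed.

End L5.

Section L6.
Variables (T1 T2 : topologicalType) (f : T1 -> T2) (g : T2 -> T1).
Hypothesis H : hp f g.
Let H' := hp_sym H.

Lemma Zset_im (z : set T1) : Zset z -> Zset (f @` z).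
Proof.
case=> [[e ce <-]|[z' [x' [ins ->]]]].
  by left; exists (f e); [rewrite /cut_point (setC1_im H) (conn_iff H)|rewrite image_set1].
by right; exists (f z'), (f x'); split; [exact: insep_im H _ _ ins|rewrite im2].
Qed.

End L6.

Section L7.
Variables (T1 T2 : topologicalType) (f : T1 -> T2) (g : T2 -> T1).
Hypothesis H : hp f g.
Let H' := hp_sym H.

Lemma nunion_im (x : T1) : ~ unionZ x -> ~ unionZ (f x).
Proof.
case: (H) => fK gK _ _.
move=> nu [w Zw wfx]; apply: nu; exists (g @` w); first exact: Zset_im H' _ Zw.
by exists (f x) => //; rewrite fK.
Qed.

End L7.

Section L8.
Variables (T1 T2 : topologicalType) (f : T1 -> T2) (g : T2 -> T1).
Hypothesis H : hp f g.
Let H' := hp_sym H.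

Lemma equiv_im (x y : T1) : equivZ x y -> equivZ (f x) (f y).
Proof.
case: (H) => fK gK _ _.
case=> nx [ny hz]; split; [exact: nunion_im H _ nx|split; [exact: nunion_im H _ ny|]].
move=> z Zz sz; apply: (hz (g @` z)); first exact: Zset_im H' _ Zz.
by have := sep_im H' sz; rewrite !fK.
Qed.

End L8.

Section L9.
Variables (T1 T2 : topologicalType) (f : T1 -> T2) (g : T2 -> T1).
Hypothesis H : hp f g.
Let H' := hp_sym H.

Lemma eqclass_im (x : T1) : f @` eqclass x = eqclass (f x).
Proof.
case: (H) => fK gK _ _.
apply/seteqP; split; first by move=> _ [y e <-]; exact: equiv_im H _ _ e.
move=> w e; exists (g w); last by rewrite gK.
by have := equiv_im H' e; rewrite fK.
Qed.

Lemma Piset_im (P : set T1) : Piset P -> Piset (f @` P).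
Proof.
case=> x [nx [[y [z [ey [ez yz]]]] ->]].
exists (f x); split; first exact: nunion_im H _ nx.
split; last by rewrite (closure_im H) eqclass_im.
exists (f y), (f z); rewrite -eqclass_im; split; [by exists y|split; [by exists z|]].
by move/(finj H).
Qed.

Lemma vertex_im v : tree_vertex v -> tree_vertex (hat f v).
Proof. by case: v => [z|p] /=; [exact: Zset_im H _|exact: Piset_im]. Qed.

Lemma hat_K v : hat g (hat f v) = v.
Proof. by case: v => [z|p] /=; rewrite (imK H). Qed.

Lemma adj_iff v w : tree_adj v w <-> tree_adj (hat f v) (hat f w).
Proof.
case: v => [z|p]; case: w => [z'|p'] //=; split; try exact: image_subset;
  by move/(image_subset g); rewrite !(imK H).
Qed.

End L9.

Theorem corollary1p2 :
  (forall (T1 T2 : topologicalType) (f : T1 -> T2),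
      ccllm_space T1 -> ccllm_space T2 -> homeomorphism f ->
      tree_iso (hat f)) /\
  (forall (T1 T2 T3 : topologicalType) (f1 : T1 -> T2) (f2 : T2 -> T3),
      ccllm_space T1 -> ccllm_space T2 -> ccllm_space T3 ->
      homeomorphism f1 -> homeomorphism f2 ->
      forall v, tree_vertex v -> hat (f2 \o f1) v = hat f2 (hat f1 v)) /\
  (forall T : topologicalType, ccllm_space T ->
      forall v, tree_vertex v -> hat (@id T) v = v).
Proof.
split; [|split].
- move=> T1 T2 f _ _ [g Hg].
  have H : hp f g by exact: Hg.
  have H' := hp_sym H.
  split; first split.
  + by move=> v; exact: vertex_im H v.
  + by move=> v w _ _ e; rewrite -(hat_K H v) e hat_K.
  + by move=> w Vw; exists (hat g w); [exact: vertex_im H' w Vw|exact: hat_K H' w].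
  + by move=> v w _ _; exact: adj_iff H v w.
- move=> T1 T2 T3 f1 f2 _ _ _ _ _ [z|p] _ /=; by rewrite image_comp.
- by move=> T _ [z|p] _ /=; rewrite image_id.
Qed.
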